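(* Let $V$ and $W$ be finite-dimensional simple Yetter-Drinfeld modules over $H=B(n,w,\gamma)$. Then $V\cong W$ if and only if there exist $\alpha,\beta\in\Bbbk^*$ and $r,i\in\mathbb{Z}$ such that both $V$ and $W$ contain a standard element of type $(\alpha,\beta,x^rg^i)$.
   Context: $\Bbbk$ is an algebraically closed field of characteristic $0$; $n,w$ positive integers, $\gamma$ a primitive $n$-th root of unity. $H=B(n,w,\gamma)$ is the Hopf algebra generated by $x^{\pm1},g,y$ with relations $xx^{-1}=x^{-1}x=1$, $xg=gx$, $xy=yx$, $yg=\gamma gy$, $y^n=1-x^w=1-g^n$, with $\Delta(x)=x\otimes x$, $\Delta(g)=g\otimes g$, $\Delta(y)=y\otimes g+1\otimes y$, $\varepsilon(x)=\varepsilon(g)=1$, $\varepsilon(y)=0$, $S(x)=x^{-1}$, $S(g)=g^{-1}$, $S(y)=-yg^{-1}$; $G(H)=\{g^jx^k\}$. A (left-left) Yetter-Drinfeld module is a left $H$-module, left $H$-comodule $(V,\cdot,\delta)$ with $\delta(h\cdot v)=h_{(1)}v_{(-1)}S(h_{(3)})\otimes h_{(2)}\cdot v_{(0)}$; simple means no nonzero proper Yetter-Drinfeld submodules; isomorphism means isomorphism of Yetter-Drinfeld modules. A nonzero $v\in V$ is a standard element of type $(\alpha,\beta,h)$ if $h\in G(H)$, $\alpha,\beta\in\Bbbk^*$, $x\cdot v=\alpha v$, $g\cdot v=\beta v$, $\delta(v)=h\otimes v$. *)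

(* Defs.v *)
From HB Require Import structures.
From mathcomp Require Import all_boot all_order all_algebra.
Set Implicit Arguments. Unset Strict Implicit. Unset Printing Implicit Defensive.
Import GRing.Theory.
Local Open Scope ring_scope.

(* The Hopf algebra H = B(n,w,gam) is modelled through its PBW basis
   { x^a g^j y^l : a : int, 0 <= j < n, 0 <= l < n }.
   A basis index (a, j, l) : Bidx stands for x^a g^j y^l. Elements of H
   (resp. H (x) H, H (x) H (x) H) are formal finite linear combinations
   (lists of (coefficient, basis index)), compared through [fcoef]. *)
Definition Bidx := (int * nat * nat)%type.

Section HopfB.
Variables (K : fieldType) (n w : nat) (gam : K).

Definition fsum (T : Type) := seq (K * T).

Definition fcoef (T : eqType) (s : fsum T) (t : T) : K :=
  \sum_(p <- s) (if p.2 == t then p.1 else 0).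

Definition fmul (T : Type) (m : T -> T -> fsum T) (s t : fsum T) : fsum T :=
  flatten (flatten [seq [seq [seq (p.1 * q.1 * r.1, r.2) | r <- m p.2 q.2]
                            | q <- t] | p <- s]).

Definition fexp (T : Type) (m : T -> T -> fsum T) (one s : fsum T) (e : nat) :=
  iter e (fmul m s) one.

Definition tens (T U : Type) (s : fsum T) (t : fsum U) : fsum (T * U) :=
  flatten [seq [seq (p.1 * q.1, (p.2, q.2)) | q <- t] | p <- s].

(* c * x^a * g^J * y^L written in the PBW basis, using
   g^n = x^w, y^n = 1 - x^w (central), for arbitrary J L : nat. *)
Definition monH (c : K) (a : int) (J L : nat) : fsum Bidx :=
  [seq (c * (-1) ^+ i * ('C(L %/ n, i))%:R,
        (a + ((w * (J %/ n))%N)%:Z + ((w * i)%N)%:Z, (J %% n)%N, (L %% n)%N))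
  | i <- iota 0 (L %/ n).+1].

(* product of basis elements: x^a g^j y^l * x^a' g^j' y^l'
   = gam^(l j') x^(a+a') g^(j+j') y^(l+l')  (since y g = gam g y) *)
Definition mulB (b b' : Bidx) : fsum Bidx :=
  let: (a, j, l) := b in let: (a', j', l') := b' in
  monH (gam ^+ (l * j')) (a + a') (j + j') (l + l').

Definition mulB2 (b b' : Bidx * Bidx) : fsum (Bidx * Bidx) :=
  tens (mulB b.1 b'.1) (mulB b.2 b'.2).

Definition mulB3 (b b' : Bidx * Bidx * Bidx) : fsum (Bidx * Bidx * Bidx) :=
  tens (mulB2 b.1 b'.1) (mulB b.2 b'.2).

Definition oneH : fsum Bidx := [:: (1, (0%:Z, 0%N, 0%N))].
Definition xH (a : int) : fsum Bidx := [:: (1, (a, 0%N, 0%N))].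
Definition gH : fsum Bidx := monH 1 0 1 0.
Definition yH : fsum Bidx := monH 1 0 0 1.
Definition one2 := tens oneH oneH.
Definition one3 := tens one2 oneH.

(* Delta (x^a g^j y^l) = Delta(x)^a Delta(g)^j Delta(y)^l,
   Delta(x) = x(x)x, Delta(g) = g(x)g, Delta(y) = y(x)g + 1(x)y *)
Definition DeltaB (b : Bidx) : fsum (Bidx * Bidx) :=
  let: (a, j, l) := b in
  fmul mulB2 (fmul mulB2 (tens (xH a) (xH a)) (fexp mulB2 one2 (tens gH gH) j))
       (fexp mulB2 one2 (tens yH gH ++ tens oneH yH) l).

Definition Delta2B (b : Bidx) : fsum (Bidx * Bidx * Bidx) :=
  let: (a, j, l) := b in
  fmul mulB3 (fmul mulB3 (tens (tens (xH a) (xH a)) (xH a))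
                         (fexp mulB3 one3 (tens (tens gH gH) gH) j))
       (fexp mulB3 one3 (tens (tens yH gH) gH ++ tens (tens oneH yH) gH
                         ++ tens (tens oneH oneH) yH) l).

(* antipode: S(x^a g^j y^l) = S(y)^l S(g)^j S(x)^a with
   S(x) = x^-1, S(g) = g^-1 = g^(n-1) x^(-w), S(y) = - y g^-1 *)
Definition ginvH : fsum Bidx := monH 1 (- (w%:Z)) n.-1 0.
Definition SyH : fsum Bidx := [seq (- p.1, p.2) | p <- fmul mulB yH ginvH].
Definition SB (b : Bidx) : fsum Bidx :=
  let: (a, j, l) := b in
  fmul mulB (fmul mulB (fexp mulB oneH SyH l) (fexp mulB oneH ginvH j)) (xH (- a)).

Definition counitB (b : Bidx) : K := if b.2 == 0%N then 1 else 0.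

Definition normB (b : Bidx) : bool := (b.1.2 < n)%N && (b.2 < n)%N.

(* A finite-dimensional (left-left) Yetter-Drinfeld module over H on V:
   - the H-module structure is given by the actions of the generators
     x, x^-1, g, y satisfying the defining relations of H;
   - the comodule structure delta(v) = sum_b b (x) D b v, with D finitely
     supported on the list S of PBW basis indices. *)
Record YDmod (V : vectType K) := {
  ydX : 'End(V); ydXi : 'End(V); ydG : 'End(V); ydY : 'End(V);
  ydD : Bidx -> 'End(V);
  ydS : seq Bidx;
  yd_XXi : forall v, ydX (ydXi v) = v;
  yd_XiX : forall v, ydXi (ydX v) = v;
  yd_XG : forall v, ydX (ydG v) = ydG (ydX v);
  yd_XY : forall v, ydX (ydY v) = ydY (ydX v);
  yd_YG : forall v, ydY (ydG v) = gam *: ydG (ydY v);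
  yd_Yn : forall v, iter n ydY v = v - iter w ydX v;
  yd_Gn : forall v, iter w ydX v = iter n ydG v;
  yd_Suniq : uniq ydS;
  yd_Snorm : all normB ydS;
  yd_Dsupp : forall b v, b \notin ydS -> ydD b v = 0;
  yd_counit : forall v, \sum_(b <- ydS) counitB b *: ydD b v = v;
  (* coassociativity: (Delta (x) id) delta = (id (x) delta) delta *)
  yd_coassoc : forall b1 b2 v,
    \sum_(b <- ydS) fcoef (DeltaB b) (b1, b2) *: ydD b v = ydD b2 (ydD b1 v)
}.

Section Action.
Variables (V : vectType K) (M : YDmod V).

Definition xpow (a : int) (v : V) : V :=
  match a with
  | Posz m => iter m (ydX M) v
  | Negz m => iter m.+1 (ydXi M) v
  end.

Definition actB (b : Bidx) (v : V) : V :=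
  let: (a, j, l) := b in xpow a (iter j (ydG M) (iter l (ydY M) v)).

Definition fcoefV (s : seq (Bidx * V)) (c : Bidx) : V :=
  \sum_(q <- s) (if q.1 == c then q.2 else 0).

(* h_(1) v_(-1) S(h_(3)) (x) h_(2) . v_(0), for h the basis element b *)
Definition ydRHS (b : Bidx) (v : V) : seq (Bidx * V) :=
  flatten (flatten
    [seq [seq [seq (r.2, (p.1 * r.1) *: actB p.2.1.2 (ydD M b' v))
              | r <- fmul mulB (fmul mulB [:: (1, p.2.1.1)] [:: (1, b')]) (SB p.2.2)]
         | b' <- ydS M] | p <- Delta2B b]).

(* Yetter-Drinfeld compatibility, for all h in the PBW basis (hence, by
   linearity, for all h in H). *)
Definition YDcompat : Prop :=
  forall b v, normB b -> forall c, ydD M c (actB b v) = fcoefV (ydRHS b v) c.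

Definition YDsub (U : {vspace V}) : Prop :=
  forall u, u \in U ->
    [/\ ydX M u \in U, ydXi M u \in U, ydG M u \in U, ydY M u \in U
      & forall b, ydD M b u \in U].

Definition simpleYD : Prop :=
  YDcompat /\ (0 < \dim (fullv : {vspace V}))%N /\
  forall U : {vspace V}, YDsub U -> U = 0%VS \/ U = fullv.

Definition standard (al be : K) (r i : int) (v : V) : Prop :=
  let h : Bidx := (r + divz i n%:Z * w%:Z, absz (modz i n%:Z), 0%N) in
  [/\ v != 0, ydX M v = al *: v, ydG M v = be *: v
    & forall b, ydD M b v = if b == h then v else 0].

End Action.

Definition isoYD (V W : vectType K) (MV : YDmod V) (MW : YDmod W) : Prop :=
  exists f : 'Hom(V, W),
    bijective f /\
    [/\ forall v, f (ydX MV v) = ydX MW (f v),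
        forall v, f (ydXi MV v) = ydXi MW (f v),
        forall v, f (ydG MV v) = ydG MW (f v),
        forall v, f (ydY MV v) = ydY MW (f v)
      & forall b v, f (ydD MV b v) = ydD MW b (f v)].

End HopfB.

(* Main.v *)
Require Import Defs.
From HB Require Import structures.
From mathcomp Require Import all_boot all_order all_algebra zify.
Set Implicit Arguments. Unset Strict Implicit. Unset Printing Implicit Defensive.
Import GRing.Theory.
Local Open Scope ring_scope.

Section Lists.
Variable K : fieldType.

Lemma fcoef_nil (T : eqType) (t : T) : fcoef ([::] : fsum K T) t = 0.
Proof. by rewrite /fcoef big_nil. Qed.

Lemma fcoef_cons (T : eqType) (p : K * T) s t :
  fcoef (p :: s) t = (if p.2 == t then p.1 else 0) + fcoef s t.
Proof. by rewrite /fcoef big_cons. Qed.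

Lemma fcoef1 (T : eqType) (k : K) (b t : T) :
  fcoef [:: (k, b)] t = if b == t then k else 0.
Proof. by rewrite fcoef_cons fcoef_nil addr0. Qed.

Lemma fcoef_nz (T : eqType) (s : fsum K T) t :
  fcoef s t != 0 -> exists2 p, p \in s & p.2 = t.
Proof.
elim: s => [|p s IH]; first by rewrite fcoef_nil eqxx.
rewrite fcoef_cons; case: (p.2 =P t) => [<- _|_]; first by exists p; rewrite ?mem_head.
rewrite add0r => /IH [q qs <-]; by exists q; rewrite // in_cons qs orbT.
Qed.

Lemma fmul1 (T : Type) (m : T -> T -> fsum K T) k b k' b' :
  fmul m [:: (k, b)] [:: (k', b')] = [seq (k * k' * r.1, r.2) | r <- m b b'].
Proof. by rewrite /fmul /= !cats0. Qed.

Lemma tens1 (T U : Type) (k : K) (b : T) k' (b' : U) :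
  tens [:: (k, b)] [:: (k', b')] = [:: (k * k', (b, b'))].
Proof. by []. Qed.

Lemma all_fmul (T : eqType) (m : T -> T -> fsum K T) (P : T -> bool) s t :
  (forall p q, p \in s -> q \in t -> all (fun r => P r.2) (m p.2 q.2)) ->
  all (fun r => P r.2) (fmul m s t).
Proof.
move=> H; rewrite /fmul; apply/allP => r.
move=> /flattenP [l1 /flattenP [l2 /mapP [p ps ->] /mapP [q qt ->]] /mapP [r' r'm ->]] /=.
by move/allP: (H p q ps qt) => /(_ r' r'm).
Qed.

Lemma all_tens (T U : eqType) (P : T * U -> bool) (s : fsum K T) (t : fsum K U) :
  (forall p q, p \in s -> q \in t -> P (p.2, q.2)) ->
  all (fun r => P r.2) (tens s t).
Proof.
move=> H; apply/allP => r /flattenP [l /mapP [p ps ->] /mapP [q qt ->]] /=.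
exact: H.
Qed.

Lemma all_fexp (T : eqType) (m : T -> T -> fsum K T) (P : nat -> T -> bool) one s e :
  all (fun r => P 0%N r.2) one ->
  (forall k p q, (k < e)%N -> p \in s -> all (fun r => P k r.2) (iter k (fmul m s) one) ->
      q \in iter k (fmul m s) one -> all (fun r => P k.+1 r.2) (m p.2 q.2)) ->
  all (fun r => P e r.2) (fexp m one s e).
Proof.
move=> H0 HS; rewrite /fexp.
suff: forall k, (k <= e)%N -> all (fun r => P k r.2) (iter k (fmul m s) one) by apply.
elim=> [|k IH] ke //=.
apply: all_fmul => p q ps qi; apply: HS => //; exact: IH (ltnW ke).
Qed.


Lemma mem_tens (T U : eqType) (s : fsum K T) (t : fsum K U) r :
  r \in tens s t -> exists p q, [/\ p \in s, q \in t & r.2 = (p.2, q.2)].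
Proof. by move=> /flattenP [l /mapP [p ps ->] /mapP [q qt ->]]; exists p, q. Qed.

Lemma mem_fmul (T : eqType) (m : T -> T -> fsum K T) s t r :
  r \in fmul m s t -> exists p q r', [/\ p \in s, q \in t, r' \in m p.2 q.2 & r.2 = r'.2].
Proof.
move=> /flattenP [l1 /flattenP [l2 /mapP [p ps ->] /mapP [q qt ->]] /mapP [r' r'm ->]].
by exists p, q, r'.
Qed.

Lemma mem_fexp (T : eqType) (m : T -> T -> fsum K T) one s e r :
  r \in fexp m one s e -> (e = 0%N /\ r \in one) \/
   exists e' p q r', [/\ e = e'.+1, p \in s, q \in fexp m one s e', r' \in m p.2 q.2 & r.2 = r'.2].
Proof.
case: e => [|e] /=; first by left.
move=> /mem_fmul [p [q [r' [H1 H2 H3 H4]]]]; right; by exists e, p, q, r'.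
Qed.

End Lists.

Lemma arA (d1 d2 l n : nat) : (d1 + d2 = l)%N -> (l < n)%N -> (d1 %% n + d2 %% n = l)%N.
Proof. by move=> H1 H2; rewrite !modn_small; lia. Qed.
Lemma arB (d1 d2 k n : nat) : (d1 + d2 = k)%N -> (k.+1 < n)%N -> ((1 + d1) %% n + d2 %% n = k.+1)%N.
Proof. by move=> H1 H2; rewrite !modn_small; lia. Qed.
Lemma arC (d1 d2 k n : nat) : (d1 + d2 = k)%N -> (k.+1 < n)%N -> (d1 %% n + (1 + d2) %% n = k.+1)%N.
Proof. by move=> H1 H2; rewrite !modn_small; lia. Qed.

Section Comp.
Variables (K : fieldType) (n w : nat) (gam : K).
Hypothesis n_gt0 : (0 < n)%N.

Lemma monH_small (c : K) a J L : (L < n)%N ->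
  monH n w c a J L = [:: (c, (a + (w * (J %/ n))%N%:Z, (J %% n)%N, L))].
Proof.
move=> Ln; rewrite /monH divn_small //= expr0 mulr1 muln0 addr0 (modn_small Ln) mulr1.
by [].
Qed.

Lemma monH_small2 (c : K) a J L : (J < n)%N -> (L < n)%N ->
  monH n w c a J L = [:: (c, (a, J, L))].
Proof.
by move=> Jn Ln; rewrite monH_small // divn_small // muln0 addr0 modn_small.
Qed.

Lemma mulB_small a j l a' j' l' : (j + j' < n)%N -> (l + l' < n)%N ->
  mulB n w gam (a, j, l) (a', j', l') =
  [:: (gam ^+ (l * j'), (a + a', (j + j')%N, (l + l')%N))].
Proof. by move=> h1 h2; rewrite /mulB monH_small2. Qed.

Lemma mulB_gen a j l a' j' l' : (l + l' < n)%N ->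
  mulB n w gam (a, j, l) (a', j', l') =
  [:: (gam ^+ (l * j'), (a + a' + (w * ((j + j') %/ n))%N%:Z, ((j + j') %% n)%N, (l + l')%N))].
Proof. by move=> h2; rewrite /mulB monH_small. Qed.

Lemma monH_deg (c : K) a J L : all (fun r => r.2.2 == (L %% n)%N) (monH n w c a J L).
Proof. by apply/allP => r /mapP [i _ ->]. Qed.

Lemma mulB_deg b b' :
  all (fun r => r.2.2 == (b.2 + b'.2) %% n)%N (mulB n w gam b b').
Proof. by case: b => [[a j] l]; case: b' => [[a' j'] l']; apply: monH_deg. Qed.

Lemma mulB_deg' b b' r : r \in mulB n w gam b b' -> r.2.2 = ((b.2 + b'.2) %% n)%N.
Proof. by move=> rin; move/allP: (mulB_deg b b') => /(_ r rin) /eqP. Qed.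

Lemma monH_deg' (c : K) a J L r : r \in monH n w c a J L -> r.2.2 = (L %% n)%N.
Proof. by move=> rin; move/allP: (monH_deg c a J L) => /(_ r rin) /eqP. Qed.

Lemma gg_deg j r : r \in fexp (mulB2 n w gam) (one2 K) (tens (gH K n w) (gH K n w)) j ->
  r.2.1.2 = 0%N /\ r.2.2.2 = 0%N.
Proof.
elim: j r => [|j IH] r /mem_fexp [[ej rin]|[e' [p [q [r' [[ej] pin qin r'in ->]]]]]] //.
- by move: rin; rewrite inE => /eqP ->.
- subst e'; move: r'in => /mem_tens [a [b [ain bin ->]]] /=.
  rewrite (mulB_deg' ain) (mulB_deg' bin).
  move: pin => /mem_tens [g1 [g2 [g1in g2in ->]]] /=.
  rewrite (monH_deg' g1in) (monH_deg' g2in) mod0n.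
  by case: (IH q qin) => -> ->; rewrite mod0n.
Qed.

Definition Ypart := tens (yH K n w) (gH K n w) ++ tens (oneH K) (yH K n w).
Definition GG j := fexp (mulB2 n w gam) (one2 K) (tens (gH K n w) (gH K n w)) j.

Lemma y_deg k r : (k < n)%N -> r \in fexp (mulB2 n w gam) (one2 K) Ypart k ->
  (r.2.1.2 + r.2.2.2 = k)%N.
Proof.
elim: k r => [|k IH] r kn /mem_fexp [[ek rin]|[e' [p [q [r' [[ek] pin qin r'in ->]]]]]] //.
- by move: rin; rewrite inE => /eqP ->.
- subst e'; move: r'in => /mem_tens [a [b [ain bin ->]]] /=.
  rewrite (mulB_deg' ain) (mulB_deg' bin).
  have n1 : (1 < n)%N by lia.
  have Hq := IH q (ltnW kn) qin.
  move: pin; rewrite mem_cat => /orP [] /mem_tens [g1 [g2 [g1in g2in ->]]] /=.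
  + rewrite (monH_deg' g1in) (monH_deg' g2in) mod0n (modn_small n1) !add0n.
    exact: arB Hq kn.
  + move: g1in; rewrite inE => /eqP -> /=.
    rewrite (monH_deg' g2in) (modn_small n1) !add0n.
    exact: arC Hq kn.
Qed.

Lemma A_deg a j r :
  r \in fmul (mulB2 n w gam) (tens (xH K a) (xH K a)) (GG j) -> r.2.1.2 = 0%N /\ r.2.2.2 = 0%N.
Proof.
move=> /mem_fmul [p [q [r' [pin qin r'in ->]]]].
move: r'in => /mem_tens [c [d [cin din ->]]] /=.
rewrite (mulB_deg' cin) (mulB_deg' din).
move: pin; rewrite inE => /eqP -> /=.
by case: (gg_deg qin) => -> ->; rewrite mod0n.
Qed.

Lemma DeltaB_deg c b1 b2 : normB n c -> fcoef (DeltaB n w gam c) (b1, b2) != 0 ->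
  (b1.2 + b2.2)%N = c.2.
Proof.
case: c => [[a j] l] /andP [jn ln] /fcoef_nz [r rin rE] /=.
have -> : b1 = r.2.1 by rewrite rE.
have -> : b2 = r.2.2 by rewrite rE.
move: rin => /mem_fmul [p [q [r' [pin qin r'in ->]]]].
move: r'in => /mem_tens [c [d [cin din ->]]] /=.
rewrite (mulB_deg' cin) (mulB_deg' din).
case: (A_deg pin) => -> ->; rewrite !add0n.
have Hq := y_deg ln qin.
exact: arA Hq ln.
Qed.

Lemma mulB2E b1 b2 b1' b2' : mulB2 n w gam (b1, b2) (b1', b2') =
  tens (mulB n w gam b1 b1') (mulB n w gam b2 b2').
Proof. by []. Qed.

Lemma mulB3E b1 b2 b3 b1' b2' b3' : mulB3 n w gam (b1, b2, b3) (b1', b2', b3') =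
  tens (tens (mulB n w gam b1 b1') (mulB n w gam b2 b2')) (mulB n w gam b3 b3').
Proof. by []. Qed.

Lemma GG_val j : (j < n)%N -> GG j = [:: (1, ((0%:Z, j, 0%N), (0%:Z, j, 0%N)))].
Proof.
elim: j => [|j IH] jn; first by rewrite /GG /= /one2 /oneH tens1 mulr1.
rewrite /GG /= -/(GG j) IH 1?ltnW // /gH monH_small2 //; last by lia.
rewrite tens1 fmul1 mulB2E !mulB_small ?add0n //.
by rewrite tens1 /= !mul0n !expr0 !mulr1 addr0.
Qed.

Lemma DeltaB_grp a j : (j < n)%N ->
  DeltaB n w gam (a, j, 0%N) = [:: (1, ((a, j, 0%N), (a, j, 0%N)))].
Proof.
move=> jn; rewrite /DeltaB -/(GG j) GG_val // /xH tens1 fmul1 mulB2E.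
rewrite !mulB_small ?add0n ?addn0 // tens1 /= /one2 /oneH tens1 fmul1 mulB2E.
rewrite !mulB_small ?add0n ?addn0 // tens1 /=.
by rewrite !muln0 !mul0n !expr0 !mulr1 !addr0.
Qed.

Definition GGG j := fexp (mulB3 n w gam) (one3 K) (tens (tens (gH K n w) (gH K n w)) (gH K n w)) j.

Lemma GGG_val j : (j < n)%N -> GGG j = [:: (1, (((0%:Z, j, 0%N), (0%:Z, j, 0%N)), (0%:Z, j, 0%N)))].
Proof.
elim: j => [|j IH] jn; first by rewrite /GGG /= /one3 /one2 /oneH !tens1 !mulr1.
rewrite /GGG /= -/(GGG j) IH 1?ltnW // /gH monH_small2 //; last by lia.
rewrite !tens1 fmul1 mulB3E !mulB_small ?add0n //.
by rewrite !tens1 /= !mul0n !expr0 !mulr1 addr0.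
Qed.

Lemma Delta2B_grp a j : (j < n)%N ->
  Delta2B n w gam (a, j, 0%N) = [:: (1, (((a, j, 0%N), (a, j, 0%N)), (a, j, 0%N)))].
Proof.
move=> jn; rewrite /Delta2B -/(GGG j) GGG_val // /xH !tens1 fmul1 mulB3E.
rewrite !mulB_small ?add0n ?addn0 // !tens1 /= /one3 /one2 /oneH !tens1 fmul1 mulB3E.
rewrite !mulB_small ?add0n ?addn0 // !tens1 /=.
by rewrite !muln0 !mul0n !expr0 !mulr1 !addr0.
Qed.

Lemma SB_x a : SB n w gam (a, 0%N, 0%N) = [:: (1, (- a, 0%N, 0%N))].
Proof.
rewrite /SB /= /oneH /xH fmul1 !mulB_small //= fmul1 !mulB_small //=.
by rewrite !muln0 !expr0 !mulr1 !add0r.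
Qed.

Lemma SB_g : (1 < n)%N -> SB n w gam (0, 1%N, 0%N) = [:: (1, (- (w%:Z), n.-1, 0%N))].
Proof.
move=> n1; rewrite /SB /= /ginvH monH_small2 //; last by lia.
rewrite /oneH /xH fmul1 mulB_small ?addn0; try lia.
rewrite fmul1 mulB_small ?add0n ?addn0; try lia.
rewrite fmul1 mulB_small ?add0n ?addn0; try lia.
by rewrite /= !muln0 !mul0n !expr0 !mulr1 !addr0 !add0r.
Qed.

Lemma LX a' j' l' : (j' < n)%N -> (l' < n)%N ->
  fmul (mulB n w gam) (fmul (mulB n w gam) [:: (1, (1%:Z, 0%N, 0%N))] [:: (1, (a', j', l'))])
       (SB n w gam (1%:Z, 0%N, 0%N)) = [:: (1, (a', j', l'))].
Proof.
move=> jn ln; rewrite SB_x fmul1 mulB_small ?add0n //= fmul1 mulB_small ?addn0 //=.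
by rewrite !muln0 !mul0n !expr0 !mulr1 addrC addKr.
Qed.

Lemma arG j : (j < n)%N ->
  ((j.+1 %% n + n.-1) %% n = j)%N /\ (j.+1 %/ n + (j.+1 %% n + n.-1) %/ n = 1)%N.
Proof.
move=> jn; case: (ltngtP j.+1 n) => [h|h|h].
- rewrite (modn_small h) (divn_small h) add0n.
  have -> : (j.+1 + n.-1 = 1 * n + j)%N by lia.
  by rewrite modnMDl divnMDl // modn_small // divn_small.
- by lia.
- rewrite h modnn divnn n_gt0 add0n modn_small ?divn_small //; lia.
Qed.

Lemma LG a' j' l' : (j' < n)%N -> (l' < n)%N -> (1 < n)%N ->
  fmul (mulB n w gam) (fmul (mulB n w gam) [:: (1, (0%:Z, 1%N, 0%N))] [:: (1, (a', j', l'))])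
       (SB n w gam (0%:Z, 1%N, 0%N)) = [:: (gam ^+ (l' * n.-1), (a', j', l'))].
Proof.
move=> jn ln n1; rewrite SB_g // fmul1 mulB_gen ?add0n // fmul1 mulB_gen ?addn0 //.
case: (arG jn) => e1 e2.
rewrite /= add1n e1 mul0n expr0 !mul1r.
congr [:: (_, (_, _, _))].
rewrite add0r -!addrA; apply/eqP; rewrite addrC -subr_eq0 addrK addrCA -PoszD -mulnDr e2 muln1.
by rewrite addNr.
Qed.

End Comp.

Section Mod.
Variables (K : fieldType) (n w : nat) (gam : K) (V : vectType K).
Variable (M : YDmod n w gam V).

Local Notation S := (ydS M).
Local Notation D := (ydD M).

Lemma fcoefV_cat (s1 s2 : seq (Bidx * V)) c : fcoefV (s1 ++ s2) c = fcoefV s1 c + fcoefV s2 c.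
Proof. by rewrite /fcoefV big_cat. Qed.

Lemma fcoefV_flatten (ss : seq (seq (Bidx * V))) c :
  fcoefV (flatten ss) c = \sum_(s <- ss) fcoefV s c.
Proof.
elim: ss => [|s ss IH]; first by rewrite /fcoefV !big_nil.
by rewrite /= fcoefV_cat IH big_cons.
Qed.

Lemma fcoefV1 b (x : V) c : fcoefV [:: (b, x)] c = if b == c then x else 0.
Proof. by rewrite /fcoefV big_cons big_nil addr0. Qed.

Lemma sum_pick (F : Bidx -> V) c :
  \sum_(b' <- S) (if b' == c then F b' else 0) = if c \in S then F c else 0.
Proof.
case: ifP => cS.
  rewrite (bigD1_seq c) //= ?eqxx ?yd_Suniq // big1 ?addr0 //.
  by move=> b' /negbTE ->.
rewrite big1_seq // => b' /andP [_ b'S]; case: eqP => // eb; subst b'.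
by rewrite b'S in cS.
Qed.

Lemma ydRHS_simple b v c (k : Bidx -> K) :
  Delta2B n w gam b = [:: (1, ((b, b), b))] ->
  (forall b', b' \in S -> fmul (mulB n w gam) (fmul (mulB n w gam) [:: (1, b)] [:: (1, b')])
                                (SB n w gam b) = [:: (k b', b')]) ->
  fcoefV (ydRHS M b v) c = if c \in S then k c *: actB M b (D c v) else 0.
Proof.
move=> HD HL; rewrite /ydRHS HD /= cats0 fcoefV_flatten big_map.
rewrite -(sum_pick (fun b0 => k b0 *: actB M b (D b0 v))); apply: eq_big_seq => b' b'S /=.
by rewrite HL //= fcoefV1 mul1r.
Qed.

Hypothesis n_gt0 : (0 < n)%N.
Local Notation X := (ydX M).
Local Notation G := (ydG M).
Local Notation Y := (ydY M).
Local Notation Xi := (ydXi M).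

Lemma S_norm b : b \in S -> normB n b.
Proof. by move=> bS; have := yd_Snorm M; move/allP => /(_ b bS). Qed.

Lemma DX (comp : YDcompat M) c v : D c (X v) = X (D c v).
Proof.
have := comp (1%:Z, 0%N, 0%N) v _ c; rewrite /normB /= n_gt0 => /(_ isT).
rewrite (@ydRHS_simple _ _ _ (fun _ => 1)) //; first last.
- case=> [[a' j'] l'] /S_norm /andP [/= jn ln]; exact: LX.
- exact: Delta2B_grp.
move=> ->; case: ifP => cS; first by rewrite scale1r.
by rewrite yd_Dsupp ?cS // linear0.
Qed.

Lemma DG (comp : YDcompat M) c v : (1 < n)%N -> D c (G v) = gam ^+ (c.2 * n.-1) *: G (D c v).
Proof.
move=> n1; have := comp (0%:Z, 1%N, 0%N) v _ c; rewrite /normB /= n_gt0 n1 => /(_ isT).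
rewrite (@ydRHS_simple _ _ _ (fun b => gam ^+ (b.2 * n.-1))) //; first last.
- case=> [[a' j'] l'] /S_norm /andP [/= jn ln]; exact: LG.
- exact: Delta2B_grp.
move=> ->; case: ifP => cS //.
by rewrite yd_Dsupp ?cS // !linear0.
Qed.

Lemma counit_eq v : v = \sum_(b <- S | b.2 == 0%N) D b v.
Proof.
transitivity (\sum_(b <- S) counitB K b *: D b v); first by rewrite yd_counit.
rewrite [RHS]big_mkcond /=; apply: eq_bigr => b _.
by rewrite /counitB; case: ifP; rewrite ?scale1r ?scale0r.
Qed.

Lemma exists_grp : (0 < \dim (fullv : {vspace V}))%N ->
  exists b0 : Bidx, exists2 z : V, z != 0 &
    [/\ b0.2 = 0%N, b0 \in S & forall b, D b z = if b == b0 then z else 0].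
Proof.
move=> dimV.
have v0nz : vpick (fullv : {vspace V}) != 0 by rewrite vpick0 -dimv_eq0 -lt0n.
set v0 := vpick _ in v0nz.
have hasc : has (fun c => D c != 0) S.
  apply/negPn/negP => /hasPn H; move/eqP: v0nz; apply.
  rewrite (counit_eq v0) big1_seq // => b /andP [_ bS].
  by move: (H b bS); rewrite negbK => /eqP ->; rewrite zero_lfunE.
pose P k := has (fun c => (D c != 0) && (c.2 == k)) S.
have exP : exists k, P k.
  case/hasP: hasc => c cS Dc; exists c.2; apply/hasP; exists c => //; by rewrite Dc eqxx.
have ubP : forall k, P k -> (k <= n)%N.
  move=> k /hasP [c cS /andP [_ /eqP <-]]; move: (S_norm cS) => /andP [_ h]; exact: ltnW.
case: (ex_maxnP exP ubP) => L /hasP [c0 c0S /andP [Dc0 /eqP c0L]] Lmax.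
case/lfunPn: Dc0 => v; rewrite zero_lfunE => Dc0v.
set w0 := D c0 v in Dc0v.
have Hw : forall b', (0 < b'.2)%N -> D b' w0 = 0.
  move=> b' b'pos; rewrite /w0 -(yd_coassoc M) big1_seq // => b /andP [_ bS].
  case: (eqVneq (fcoef (DeltaB n w gam b) (c0, b')) 0) => [->|nz]; first by rewrite scale0r.
  have Hdeg := DeltaB_deg n_gt0 (S_norm bS) nz.
  case: (eqVneq (D b) 0) => [->|Db]; first by rewrite zero_lfunE scaler0.
  have : P b.2 by apply/hasP; exists b => //; rewrite Db eqxx.
  by move/Lmax; rewrite -Hdeg -c0L -{2}[c0.2]addn0 leq_add2l leqNgt b'pos.
have hasb : has (fun b => (b.2 == 0%N) && (D b w0 != 0)) S.
  apply/negPn/negP => /hasPn H; move/eqP: Dc0v; apply.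
  rewrite (counit_eq w0) big1_seq // => b /andP [b0 bS].
  by move: (H b bS); rewrite b0 /= negbK => /eqP.
case/hasP: hasb => b0 b0S /andP [/eqP b00 Db0].
exists b0; exists (D b0 w0) => //; split=> // b'.
rewrite -(yd_coassoc M).
transitivity (\sum_(c <- S) (if c == b0 then (if b' == b0 then D b0 w0 else 0) else 0)).
  apply: eq_big_seq => c cS.
  have cn := S_norm cS.
  case: (posnP c.2) => [c20|c2pos]; last first.
    rewrite Hw // scaler0; case: eqP => // e; subst c; by rewrite b00 in c2pos.
  case: c c20 cS cn => [[a j] l] c20 cS cn; rewrite /= in c20; subst l.
  case/andP: cn => jn _.
  rewrite DeltaB_grp // fcoef1 xpair_eqE.
  case: ((a, j, 0%N) =P b0) => [<-|ne] /=; last by rewrite scale0r.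
  by rewrite eq_sym; case: eqP; rewrite ?scale1r ?scale0r.
by rewrite sum_pick b0S.
Qed.

End Mod.

Section Eig.
Variables (K : closedFieldType) (V : vectType K).

Lemma eig_sub (f : 'End(V)) (U : {vspace V}) : U != 0%VS ->
  (forall u, u \in U -> f u \in U) ->
  exists a, exists2 v, v \in U & (v != 0) /\ f v = a *: v.
Proof.
move=> Unz fU.
set d := \dim U; set e := vbasis U.
have eU : forall i : 'I_d, e`_i \in U by move=> i; apply: vbasis_mem; apply: mem_nth; rewrite size_tuple.
pose A : 'M[K]_d := \matrix_(i, j) coord e j (f e`_i).
have : size (char_poly A) != 1%N by rewrite size_char_poly -lt0n lt0n dimv_eq0.
case/closed_rootP => a; rewrite -eigenvalue_root_char => /eigenvalueP [r rA rnz].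
exists a; exists (\sum_i r 0 i *: e`_i).
  by apply: memv_suml => i _; apply: memvZ.
split.
  apply: contra rnz => /eqP H; apply/eqP/rowP => j; rewrite mxE.
  by move/freeP: (basis_free (vbasisP U)) => /(_ (r 0) H j).
rewrite linear_sum /=.
transitivity (\sum_i r 0 i *: \sum_j A i j *: e`_j).
  apply: eq_bigr => i _; rewrite linearZ /=; congr (_ *: _).
  rewrite {1}(coord_vbasis (fU _ (eU i))); apply: eq_bigr => j _; by rewrite mxE.
transitivity (\sum_j (r *m A) 0 j *: e`_j).
  rewrite (eq_bigr (fun i => \sum_j (r 0 i * A i j) *: e`_j)); last first.
    by move=> i _; rewrite scaler_sumr; apply: eq_bigr => j _; rewrite scalerA.
  rewrite exchange_big /=; apply: eq_bigr => j _; rewrite mxE scaler_suml //.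
rewrite rA scaler_sumr; apply: eq_bigr => j _; by rewrite mxE scalerA.
Qed.

End Eig.

Lemma iter_eig (K : fieldType) (V : vectType K) (f : 'End(V)) (a : K) v k :
  f v = a *: v -> iter k f v = a ^+ k *: v.
Proof.
move=> fv; elim: k => [|k IH]; first by rewrite expr0 scale1r.
by rewrite iterS IH linearZ /= fv scalerA exprS mulrC.
Qed.

Lemma iter_lin (K : fieldType) (V : vectType K) (f : 'End(V)) k : iter k f 0 = 0.
Proof. by elim: k => [|k IH] //=; rewrite IH linear0. Qed.

Lemma memv_bigcapP (K : fieldType) (V : vectType K) (r : seq Bidx) (F : Bidx -> {vspace V}) v :
  (v \in \bigcap_(b <- r) F b)%VS = all (fun b => v \in F b) r.
Proof.
elim: r => [|b r IH]; first by rewrite big_nil memvf.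
by rewrite big_cons memv_cap IH.
Qed.

Section Fwd.
Variables (K : closedFieldType) (n w : nat) (gam : K) (V : vectType K).
Variable (M : YDmod n w gam V).
Hypothesis n_gt0 : (0 < n)%N.
Hypothesis comp : YDcompat M.

Local Notation S := (ydS M).
Local Notation D := (ydD M).
Local Notation X := (ydX M).
Local Notation G := (ydG M).
Local Notation Xi := (ydXi M).

Lemma exists_standard : (0 < \dim (fullv : {vspace V}))%N ->
  exists al be r i v, [/\ al != 0, be != 0 & standard M al be r i v].
Proof.
move=> dimV.
case: (exists_grp M n_gt0 dimV) => b0 [z znz [b00 b0S Dz]].
pose Vh := (\bigcap_(b <- S) lker (D b - (if b == b0 then \1%VF else 0%R))%R)%VS.
have VhP : forall v, reflect (forall b, D b v = if b == b0 then v else 0) (v \in Vh).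
  move=> v; apply: (iffP idP).
    rewrite memv_bigcapP => /allP H b.
    case bS: (b \in S).
      move: (H b bS); rewrite memv_ker add_lfunE opp_lfunE subr_eq0 => /eqP ->.
      by case: ifP; rewrite ?id_lfunE ?zero_lfunE.
    rewrite yd_Dsupp ?bS //; case: eqP => // e; subst b; by rewrite b0S in bS.
  move=> H; rewrite memv_bigcapP; apply/allP => b _.
  rewrite memv_ker add_lfunE opp_lfunE subr_eq0 H.
  by case: ifP; rewrite ?id_lfunE ?zero_lfunE.
have zVh : z \in Vh by apply/VhP.
have XVh : forall v, v \in Vh -> X v \in Vh.
  move=> v /VhP H; apply/VhP => b; rewrite (DX n_gt0 comp) H.
  by case: ifP; rewrite ?linear0.
have XwVh : forall k v, v \in Vh -> iter k X v \in Vh.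
  by move=> k v vV; elim: k => [|k IH] //=; apply: XVh.
have GVh : forall v, v \in Vh -> G v \in Vh.
  move=> v vV; case: (ltngtP 1 n) => [n1|//|n1].
  - move/VhP: vV => H; apply/VhP => b; rewrite (DG n_gt0 comp) // H.
    case: eqP => [->|_]; first by rewrite b00 mul0n expr0 scale1r.
    by rewrite linear0 scaler0.
  - by lia.
  - have : iter w X v = iter n G v by exact: (yd_Gn M).
    have iter1 : forall k (f : 'End(V)) x, 1%N = k -> iter k f x = f x by move=> k f x <-.
    rewrite (iter1 n G v n1) => <-; exact: XwVh.
have Vhnz : Vh != 0%VS by apply/eqP => e; move: zVh; rewrite e memv0 (negbTE znz).
case: (eig_sub Vhnz XVh) => al [v1 v1Vh [v1nz Xv1]].
pose E := (Vh :&: lker (X - al *: \1%VF))%VS.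
have EP : forall v, v \in E = (v \in Vh) && (X v == al *: v).
  by move=> v; rewrite memv_cap memv_ker add_lfunE opp_lfunE scale_lfunE id_lfunE subr_eq0.
have Enz : E != 0%VS.
  by apply/eqP => e; move: (EP v1); rewrite e memv0 (negbTE v1nz) v1Vh Xv1 eqxx.
have GE : forall v, v \in E -> G v \in E.
  move=> v; rewrite !EP => /andP [vV /eqP Xv]; rewrite GVh //=.
  by rewrite (yd_XG M) Xv linearZ.
case: (eig_sub Enz GE) => be [v vE [vnz Gv]].
move: vE; rewrite EP => /andP [/VhP vV /eqP Xv].
have alnz : al != 0.
  apply: contra vnz => /eqP al0; apply/eqP.
  by rewrite -(yd_XiX M v) Xv al0 scale0r linear0.
have benz : be != 0.
  apply: contra vnz => /eqP be0; apply/eqP.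
  have := yd_Gn M v; rewrite (iter_eig w Xv) (iter_eig n Gv) be0 expr0n.
  rewrite eqn0Ngt n_gt0 /= scale0r => /eqP; rewrite scaler_eq0 expf_eq0 (negbTE alnz) andbF /=.
  by move/eqP.
have [a [j b0E]] : exists a j, b0 = (a, j, 0%N).
  by exists b0.1.1, b0.1.2; rewrite -b00; case: (b0) => [[? ?] ?].
rewrite b0E in vV b0S.
have jn : (j < n)%N by case/andP: (S_norm b0S).
exists al, be, a, j%:Z, v; split=> //; split=> //.
have -> : (a + (j%:Z %/ n%:Z)%Z * w%:Z, `|(j%:Z %% n%:Z)%Z|%N, 0%N) = (a, j, 0%N).
  rewrite divz_small ?modz_small /= ?mul0r ?addr0 //; apply/andP; split=> //; by rewrite ltz_nat.
exact: vV.
Qed.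

End Fwd.

Section PairF.
Variables (K : fieldType) (V W : vectType K) (fV : 'End(V)) (fW : 'End(W)).
Definition pairf (t : (V * W)%type) : (V * W)%type := (fV t.1, fW t.2).
Fact pairf_lin : linear pairf.
Proof. by move=> k x y; rewrite /pairf /= !linearP. Qed.
HB.instance Definition _ := GRing.isLinear.Build _ _ _ _ pairf pairf_lin.
Definition pairL : 'End((V * W)%type) := linfun pairf.
Lemma pairLE t : pairL t = (fV t.1, fW t.2).
Proof. by rewrite /pairL lfunE. Qed.
End PairF.

Section Proj.
Variables (K : fieldType) (V W : vectType K).
Definition fstL : 'Hom((V * W)%type, V) := linfun (@fst V W).
Definition sndL : 'Hom((V * W)%type, W) := linfun (@snd V W).
Lemma fstLE t : fstL t = t.1. Proof. by rewrite /fstL lfunE. Qed.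
Lemma sndLE t : sndL t = t.2. Proof. by rewrite /sndL lfunE. Qed.

Lemma span_closed (T : {vspace (V * W)%type}) (X : seq (V * W)%type%type) (f : 'End((V * W)%type)%type) :
  (forall x, x \in X -> f x \in T) -> forall t, t \in <<X>>%VS -> f t \in T.
Proof.
move=> H t tX.
have : (f @: <<X>> <= T)%VS by rewrite limg_span; apply/span_subvP => y /mapP [x xX ->]; exact: H.
move/subvP; apply; exact: memv_img.
Qed.

Definition Kfst (T : {vspace (V * W)%type}) : {vspace W} := (sndL @: (T :&: lker fstL))%VS.
Lemma KfstP (T : {vspace (V * W)%type}) b : (b \in Kfst T) = ((0, b) \in T).
Proof.
apply/memv_imgP/idP => [[t /memv_capP [tT tk] ->]|H].
  by move: tk; rewrite memv_ker fstLE sndLE => /eqP t1; rewrite -t1 -surjective_pairing.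
by exists (0, b); rewrite ?sndLE // memv_cap H memv_ker fstLE eqxx.
Qed.

Definition Ksnd (T : {vspace (V * W)%type}) : {vspace V} := (fstL @: (T :&: lker sndL))%VS.
Lemma KsndP (T : {vspace (V * W)%type}) a : (a \in Ksnd T) = ((a, 0) \in T).
Proof.
apply/memv_imgP/idP => [[t /memv_capP [tT tk] ->]|H].
  by move: tk; rewrite memv_ker fstLE sndLE => /eqP t1; rewrite -t1 -surjective_pairing.
by exists (a, 0); rewrite ?fstLE // memv_cap H memv_ker sndLE eqxx.
Qed.

Definition Pfst (T : {vspace (V * W)%type}) : {vspace V} := (fstL @: T)%VS.
Lemma PfstP (T : {vspace (V * W)%type}) a : reflect (exists b, (a, b) \in T) (a \in Pfst T).
Proof.
apply: (iffP memv_imgP) => [[t tT ->]|[b H]].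
  by exists t.2; rewrite fstLE -surjective_pairing.
by exists (a, b); rewrite ?fstLE.
Qed.

Definition Psnd (T : {vspace (V * W)%type}) : {vspace W} := (sndL @: T)%VS.
Lemma PsndP (T : {vspace (V * W)%type}) b : reflect (exists a, (a, b) \in T) (b \in Psnd T).
Proof.
apply: (iffP memv_imgP) => [[t tT ->]|[a H]].
  by exists t.1; rewrite sndLE -surjective_pairing.
by exists (a, b); rewrite ?sndLE.
Qed.

End Proj.

Definition fpow (K : fieldType) (V : vectType K) (f : 'End(V)) k : 'End(V) :=
  iter k (fun g => (f \o g)%VF) \1%VF.
Lemma fpowE (K : fieldType) (V : vectType K) (f : 'End(V)) k x : fpow f k x = iter k f x.
Proof. by elim: k => [|k IH] /=; rewrite ?id_lfunE // comp_lfunE -IH. Qed.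

Definition hOf (n w : nat) (r i : int) : Bidx :=
  (r + (i %/ n%:Z)%Z * w%:Z, `|(i %% n%:Z)%Z|%N, 0%N).

Definition Lst (K : fieldType) n w (gam : K) (p : K * (Bidx * Bidx * Bidx)) (h : Bidx) :=
  fmul (mulB n w gam) (fmul (mulB n w gam) [:: (1, p.2.1.1)] [:: (1, h)]) (SB n w gam p.2.2).

Section OneMod.
Variables (K : fieldType) (n w : nat) (gam : K) (V : vectType K).
Variable (M : YDmod n w gam V).
Hypothesis n_gt0 : (0 < n)%N.
Hypothesis gam_prim : n.-primitive_root gam.
Variables (al be : K) (r i : int) (v : V).
Hypothesis st : standard M al be r i v.

Local Notation S := (ydS M).
Local Notation D := (ydD M).
Local Notation X := (ydX M).
Local Notation G := (ydG M).
Local Notation Y := (ydY M).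
Local Notation Xi := (ydXi M).
Local Notation h := (hOf n w r i).

Lemma st_nz : v != 0. Proof. by case: st. Qed.
Lemma st_X : X v = al *: v. Proof. by case: st. Qed.
Lemma st_G : G v = be *: v. Proof. by case: st. Qed.
Lemma st_D b : D b v = if b == h then v else 0. Proof. by case: st => _ _ _ ->. Qed.

Lemma hS : h \in S.
Proof.
apply/negPn/negP => hn; move: st_nz; rewrite -(yd_Dsupp v hn).
by rewrite st_D eqxx eqxx.
Qed.

Lemma gam_nz : gam != 0.
Proof. by rewrite (prim_root_eq0 gam_prim) -lt0n n_gt0. Qed.

Lemma XYl l x : X (iter l Y x) = iter l Y (X x).
Proof. by elim: l => [|l IH] //=; rewrite (yd_XY M) IH. Qed.

Lemma X_Yl l : X (iter l Y v) = al *: iter l Y v.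
Proof.
rewrite XYl st_X; elim: l => [|l IH] //=; by rewrite IH linearZ /=.
Qed.

Lemma Xi_Yl (alnz : al != 0) l : Xi (iter l Y v) = al^-1 *: iter l Y v.
Proof.
have : X (al^-1 *: iter l Y v) = iter l Y v by rewrite linearZ /= X_Yl scalerA mulVf ?scale1r.
by move=> H; rewrite -{1}H (yd_XiX M).
Qed.

Lemma GY x : G (Y x) = gam^-1 *: Y (G x).
Proof. by rewrite (yd_YG M) scalerA mulVf ?gam_nz // scale1r. Qed.

Lemma G_Yl l : G (iter l Y v) = ((gam^-1) ^+ l * be) *: iter l Y v.
Proof.
elim: l => [|l IH] /=; first by rewrite expr0 mul1r st_G.
by rewrite GY IH linearZ /= scalerA exprS mulrA.
Qed.

Lemma Y_top : iter n Y v = (1 - al ^+ w) *: v.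
Proof.
rewrite (yd_Yn M) (iter_eig w st_X) scalerBl scale1r //.
Qed.

Lemma actB_zero q : actB M q 0 = 0.
Proof.
case: q => [[a j] l]; rewrite /actB !iter_lin.
by case: a => m; rewrite /xpow iter_lin.
Qed.

Lemma D_Yl (comp : YDcompat M) c l : (l < n)%N ->
  D c (iter l Y v) = \sum_(p <- Delta2B n w gam (0%:Z, 0%N, l))
     \sum_(q <- Lst n w gam p h) (if q.2 == c then (p.1 * q.1) *: actB M p.2.1.2 v else 0).
Proof.
move=> ln.
have -> : iter l Y v = actB M (0%:Z, 0%N, l) v by [].
rewrite comp; last by rewrite /normB /= n_gt0.
rewrite /ydRHS fcoefV_flatten big_flatten /= big_map; apply: eq_bigr => p _.
rewrite big_map.
transitivity (\sum_(b' <- S) (if b' == h then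
   fcoefV [seq (q.2, (p.1 * q.1) *: actB M p.2.1.2 v) | q <- Lst n w gam p h] c else 0)).
  apply: eq_big_seq => b' b'S; rewrite st_D.
  case: eqP => [->|_] //.
  rewrite /fcoefV big_map big1 // => q _; rewrite actB_zero scaler0; by case: ifP.
rewrite sum_pick hS /fcoefV big_map; apply: eq_bigr => q _; by [].
Qed.

Definition Qop : 'End(V) := \sum_(k < n) (be^-1 ^+ k) *: fpow G k.

Lemma root_sum l : (l < n)%N ->
  \sum_(k < n) ((gam^-1) ^+ l) ^+ k = if l == 0%N then n%:R else 0.
Proof.
move=> ln; set z := (gam^-1) ^+ l.
case: eqP => [l0|l0].
  by rewrite /z l0 expr0 (eq_bigr (fun _ => 1)) ?sumr_const ?card_ord // => k _; rewrite expr1n.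
have zn : z ^+ n = 1.
  by rewrite /z -exprM mulnC exprM exprVn (prim_expr_order gam_prim) invr1 expr1n.
have z1 : z - 1 != 0.
  rewrite subr_eq0 /z exprVn invr_eq1 -(prim_order_dvd gam_prim).
  apply/negP => /dvdn_leq; rewrite lt0n => H.
  by move/eqP: l0 => /H; rewrite leqNgt ln.
have : (z - 1) * (\sum_(k < n) z ^+ k) = 0 by rewrite -subrX1 zn subrr.
by move/eqP; rewrite mulf_eq0 (negbTE z1) /= => /eqP.
Qed.

Lemma Q_Yl l : (l < n)%N -> be != 0 ->
  Qop (iter l Y v) = (if l == 0%N then n%:R else 0) *: iter l Y v.
Proof.
move=> ln benz; rewrite sum_lfunE.
rewrite (eq_bigr (fun k : 'I_n => ((gam^-1 ^+ l) ^+ k) *: iter l Y v)); last first.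
  move=> k _; rewrite scale_lfunE fpowE (iter_eig k (G_Yl l)) scalerA.
  by rewrite exprMn mulrCA -exprMn mulVf // expr1n mulr1.
by rewrite -scaler_suml root_sum.
Qed.

End OneMod.

Section Pair.
Variables (K : fieldType) (n w : nat) (gam : K).
Hypothesis charK : [pchar K] =i pred0.
Hypothesis n_gt0 : (0 < n)%N.
Hypothesis gam_prim : n.-primitive_root gam.
Variables (V W : vectType K) (MV : YDmod n w gam V) (MW : YDmod n w gam W).
Hypotheses (compV : YDcompat MV) (compW : YDcompat MW).
Variables (al be : K) (r i : int) (v : V) (u : W).
Hypotheses (alnz : al != 0) (benz : be != 0).
Hypotheses (stV : standard MV al be r i v) (stW : standard MW al be r i u).

Definition Yp l : (V * W)%type := (iter l (ydY MV) v, iter l (ydY MW) u).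
Definition Xs := [seq Yp l | l <- iota 0 n].
Definition T : {vspace (V * W)%type} := <<Xs>>%VS.

Lemma YpT l : (l < n)%N -> Yp l \in T.
Proof. by move=> ln; apply: memv_span; apply: map_f; rewrite mem_iota. Qed.

Lemma T_closed (fV : 'End(V)) (fW : 'End(W)) :
  (forall l, (l < n)%N -> (fV (iter l (ydY MV) v), fW (iter l (ydY MW) u)) \in T) ->
  forall t, t \in T -> (fV t.1, fW t.2) \in T.
Proof.
move=> H t tT; rewrite -pairLE; apply: span_closed tT => x /mapP [l].
by rewrite mem_iota add0n => /andP [_ ln] ->; rewrite pairLE; apply: H.
Qed.

Lemma Titer (fV : 'End(V)) (fW : 'End(W)) :
  (forall t, t \in T -> (fV t.1, fW t.2) \in T) ->
  forall k t, t \in T -> (iter k fV t.1, iter k fW t.2) \in T.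
Proof.
move=> H; elim=> [|k IH] t tT /=; first by rewrite -surjective_pairing.
exact: (H (iter k fV t.1, iter k fW t.2) (IH t tT)).
Qed.

Lemma ZT (k : K) (a : V) (b : W) : (a, b) \in T -> (k *: a, k *: b) \in T.
Proof. by move=> H; have -> : (k *: a, k *: b) = k *: (a, b) by []; apply: memvZ. Qed.

Lemma TX t : t \in T -> (ydX MV t.1, ydX MW t.2) \in T.
Proof.
apply: T_closed => l ln; rewrite (X_Yl stV) (X_Yl stW); apply: ZT; exact: YpT.
Qed.

Lemma TXi t : t \in T -> (ydXi MV t.1, ydXi MW t.2) \in T.
Proof.
apply: T_closed => l ln; rewrite (Xi_Yl stV) // (Xi_Yl stW) //; apply: ZT; exact: YpT.
Qed.

Lemma TG t : t \in T -> (ydG MV t.1, ydG MW t.2) \in T.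
Proof.
apply: T_closed => l ln; rewrite (G_Yl n_gt0 gam_prim stV) (G_Yl n_gt0 gam_prim stW); apply: ZT; exact: YpT.
Qed.

Lemma TY t : t \in T -> (ydY MV t.1, ydY MW t.2) \in T.
Proof.
apply: T_closed => l ln.
case: (ltnP l.+1 n) => [l1n|nl].
  by have := YpT l1n.
have ln1 : l.+1 = n by apply/eqP; rewrite eqn_leq ln nl.
have itS : forall (T0 : Type) (f : T0 -> T0) x k m, m.+1 = k -> f (iter m f x) = iter k f x.
  by move=> T0 f x k m <-.
rewrite (itS _ _ _ _ _ ln1) (itS _ _ _ _ _ ln1).
rewrite (Y_top stV) (Y_top stW); apply: ZT; exact: (YpT n_gt0).
Qed.

Lemma T0 : ((v, u) : (V * W)%type) \in T.
Proof. exact: (YpT n_gt0). Qed.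

Lemma Tact q : (actB MV q v, actB MW q u) \in T.
Proof.
case: q => [[a j] l]; rewrite /actB.
have H1 := Titer TY l T0.
have H2 := Titer TG j H1.
case: a => m /=.
  exact: (Titer TX m H2).
exact: (Titer TXi m.+1 H2).
Qed.

Lemma TD c t : t \in T -> (ydD MV c t.1, ydD MW c t.2) \in T.
Proof.
apply: T_closed => l ln.
rewrite (D_Yl n_gt0 stV compV) // (D_Yl n_gt0 stW compW) //.
apply: (big_ind2 (fun x y => (x, y) \in T)); first exact: mem0v.
  by move=> x1 x2 y1 y2 h1 h2; have := memvD h1 h2.
move=> p _.
apply: (big_ind2 (fun x y => (x, y) \in T)); first exact: mem0v.
  by move=> x1 x2 y1 y2 h1 h2; have := memvD h1 h2.
move=> q _; case: ifP => _; last exact: mem0v.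
apply: ZT; exact: Tact.
Qed.

Lemma nK : (n%:R : K) != 0.
Proof. by move/(pcharf0P K): charK => ->; rewrite -lt0n. Qed.

Lemma QT t : t \in T -> (Qop MV be t.1, Qop MW be t.2) \in <[((v, u) : (V * W)%type)]>%VS.
Proof.
move=> tT; rewrite -pairLE; apply: span_closed tT => x /mapP [l].
rewrite mem_iota add0n => /andP [_ ln] ->; rewrite pairLE /=.
rewrite (Q_Yl n_gt0 gam_prim stV) // (Q_Yl n_gt0 gam_prim stW) //.
case: eqP => [l0|_]; last by rewrite !scale0r; apply: mem0v.
subst l; have -> : ((n%:R : K) *: v, (n%:R : K) *: u) = (n%:R : K) *: ((v, u) : (V * W)%type) by [].
by apply: memvZ; apply: memv_line.
Qed.

Lemma sepW : ((0, u) : (V * W)%type) \notin T.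
Proof.
apply/negP => /QT /=; rewrite linear0.
rewrite -[u in Qop MW be u]/(iter 0 (ydY MW) u) (Q_Yl n_gt0 gam_prim stW) //= => /vlineP [k e].
have e1 := congr1 fst e; have e2 := congr1 snd e; rewrite /= in e1 e2.
have k0 : k = 0.
  by apply/eqP; move/esym/eqP: e1; rewrite scaler_eq0 (negbTE (st_nz stV)) orbF.
move/eqP: e2; rewrite k0 scale0r scaler_eq0 (negbTE nK) /= => /eqP u0.
by move: (st_nz stW); rewrite u0 eqxx.
Qed.

Lemma sepV : ((v, 0) : (V * W)%type) \notin T.
Proof.
apply/negP => /QT /=; rewrite linear0.
rewrite -[v in Qop MV be v]/(iter 0 (ydY MV) v) (Q_Yl n_gt0 gam_prim stV) //= => /vlineP [k e].
have e1 := congr1 fst e; have e2 := congr1 snd e; rewrite /= in e1 e2.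
have k0 : k = 0.
  by apply/eqP; move/esym/eqP: e2; rewrite scaler_eq0 (negbTE (st_nz stW)) orbF.
move/eqP: e1; rewrite k0 scale0r scaler_eq0 (negbTE nK) /= => /eqP v0.
by move: (st_nz stV); rewrite v0 eqxx.
Qed.

Hypothesis simpV : forall U : {vspace V}, YDsub MV U -> U = 0%VS \/ U = fullv.
Hypothesis simpW : forall U : {vspace W}, YDsub MW U -> U = 0%VS \/ U = fullv.

Lemma KW0 b : ((0, b) : (V * W)%type) \in T -> b = 0.
Proof.
have sub : YDsub MW (Kfst T).
  move=> b'; rewrite !KfstP => H.
  have h1 := TX H; have h2 := TXi H; have h3 := TG H; have h4 := TY H.
  have h5 := fun c => TD c H.
  rewrite /= !linear0 in h1 h2 h3 h4; split=> // c.
  by have := h5 c; rewrite /= linear0 KfstP.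
case: (simpW sub) => [e|e] H.
  by move: H; rewrite -KfstP e memv0 => /eqP.
by move: sepW; rewrite -KfstP e memvf.
Qed.

Lemma KV0 a : ((a, 0) : (V * W)%type) \in T -> a = 0.
Proof.
have sub : YDsub MV (Ksnd T).
  move=> b'; rewrite !KsndP => H.
  have h1 := TX H; have h2 := TXi H; have h3 := TG H; have h4 := TY H.
  have h5 := fun c => TD c H.
  rewrite /= !linear0 in h1 h2 h3 h4; split=> // c.
  by have := h5 c; rewrite /= linear0 KsndP.
case: (simpV sub) => [e|e] H.
  by move: H; rewrite -KsndP e memv0 => /eqP.
by move: sepV; rewrite -KsndP e memvf.
Qed.

Lemma PfstF a : exists b, ((a, b) : (V * W)%type) \in T.
Proof.
have sub : YDsub MV (Pfst T).
  move=> a' /PfstP [b H].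
  split; [apply/PfstP; exists (ydX MW b)|apply/PfstP; exists (ydXi MW b)
         |apply/PfstP; exists (ydG MW b)|apply/PfstP; exists (ydY MW b)|].
  - exact: (TX H).
  - exact: (TXi H).
  - exact: (TG H).
  - exact: (TY H).
  by move=> c; apply/PfstP; exists (ydD MW c b); exact: (TD c H).
case: (simpV sub) => e.
  have vP : v \in Pfst T by apply/PfstP; exists u; exact: T0.
  by move: vP (st_nz stV); rewrite e memv0 => ->.
by apply/PfstP; rewrite e memvf.
Qed.

Lemma PsndF b : exists a, ((a, b) : (V * W)%type) \in T.
Proof.
have sub : YDsub MW (Psnd T).
  move=> b' /PsndP [a H].
  split; [apply/PsndP; exists (ydX MV a)|apply/PsndP; exists (ydXi MV a)
         |apply/PsndP; exists (ydG MV a)|apply/PsndP; exists (ydY MV a)|].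
  - exact: (TX H).
  - exact: (TXi H).
  - exact: (TG H).
  - exact: (TY H).
  by move=> c; apply/PsndP; exists (ydD MV c a); exact: (TD c H).
case: (simpW sub) => e.
  have uP : u \in Psnd T by apply/PsndP; exists v; exact: T0.
  by move: uP (st_nz stW); rewrite e memv0 => ->.
by apply/PsndP; rewrite e memvf.
Qed.

Lemma iso_main : isoYD MV MW.
Proof.
pose g : 'Hom((V * W)%type, V) := (fstL V W \o projv T)%VF.
have gim : forall a, a \in limg g.
  move=> a; case: (PfstF a) => b H.
  have -> : a = g (a, b) by rewrite comp_lfunE projv_id // fstLE.
  exact: memv_img (memvf _).
pose f : 'Hom(V, W) := (sndL V W \o projv T \o g^-1)%VF.
have graph : forall a, ((a, f a) : (V * W)%type) \in T.
  move=> a; have tT := memv_proj T (g^-1%VF a).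
  have e1 : (projv T (g^-1%VF a)).1 = a.
    by rewrite -fstLE -comp_lfunE -/g limg_lfunVK.
  have -> : f a = (projv T (g^-1%VF a)).2 by rewrite !comp_lfunE sndLE.
  by rewrite -{1}e1 -surjective_pairing.
have uniq : forall a b, ((a, b) : (V * W)%type) \in T -> b = f a.
  move=> a b H; apply/eqP; rewrite -subr_eq0; apply/eqP; apply: KW0.
  have -> : ((0, b - f a) : (V * W)%type) = (a, b) - (a, f a).
    by have -> : ((a, b) : (V * W)%type) - (a, f a) = (a - a, b - f a) by []; rewrite subrr.
  exact: memvB.
pose g' : 'Hom((V * W)%type, W) := (sndL V W \o projv T)%VF.
have gim' : forall b, b \in limg g'.
  move=> b; case: (PsndF b) => a H.
  have -> : b = g' (a, b) by rewrite comp_lfunE projv_id // sndLE.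
  exact: memv_img (memvf _).
pose f' : 'Hom(W, V) := (fstL V W \o projv T \o g'^-1)%VF.
have graph' : forall b, ((f' b, b) : (V * W)%type) \in T.
  move=> b; have tT := memv_proj T (g'^-1%VF b).
  have e1 : (projv T (g'^-1%VF b)).2 = b.
    by rewrite -sndLE -comp_lfunE -/g' limg_lfunVK.
  have -> : f' b = (projv T (g'^-1%VF b)).1 by rewrite !comp_lfunE fstLE.
  by rewrite -{2}e1 -surjective_pairing.
exists f; split.
  exists f' => [a|b].
    apply/eqP; rewrite -subr_eq0; apply/eqP; apply: KV0.
    have -> : ((f' (f a) - a, 0) : (V * W)%type) = (f' (f a), f a) - (a, f a).
      by have -> : ((f' (f a), f a) : (V * W)%type) - (a, f a) = (f' (f a) - a, f a - f a) by []; rewrite subrr.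
    exact: memvB (graph' (f a)) (graph a).
  by rewrite -(uniq _ _ (graph' b)).
split.
- by move=> a; rewrite (uniq _ _ (TX (graph a))).
- by move=> a; rewrite (uniq _ _ (TXi (graph a))).
- by move=> a; rewrite (uniq _ _ (TG (graph a))).
- by move=> a; rewrite (uniq _ _ (TY (graph a))).
- by move=> c a; rewrite (uniq _ _ (TD c (graph a))).
Qed.

End Pair.

Unset Implicit Arguments. Set Strict Implicit.

Theorem corollary3p21 (K : closedFieldType) (charK : [pchar K] =i pred0)
  (n w : nat) (gam : K) (n_gt0 : (0 < n)%N) (w_gt0 : (0 < w)%N)
  (gam_prim : n.-primitive_root gam)
  (V W : vectType K) (MV : YDmod n w gam V) (MW : YDmod n w gam W) :
  simpleYD MV -> simpleYD MW ->
  (isoYD MV MW <->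
   exists (al be : K) (r i : int),
     [/\ al != 0, be != 0,
         (exists v, standard MV al be r i v)
       & (exists u, standard MW al be r i u)]).
Proof.
move=> [compV [dimV simpV]] [compW [dimW simpW]]; split.
- move=> [f [[f' ff' f'f] [fX fXi fG fY fD]]].
  case: (exists_standard n_gt0 compV dimV) => al [be [r [i [v [alnz benz stv]]]]].
  exists al, be, r, i; split=> //; first by exists v.
  exists (f v); case: stv => vnz Xv Gv Dv; split.
  + apply: contra vnz => /eqP fv0; apply/eqP.
    have : f v = f 0 by rewrite fv0 GRing.linear0.
    by move/(can_inj ff').
  + by rewrite -fX Xv GRing.linearZ.
  + by rewrite -fG Gv GRing.linearZ.
  + by move=> b; rewrite -fD Dv; case: ifP => // _; rewrite GRing.linear0.
- move=> [al [be [r [i [alnz benz [v stv] [u stu]]]]]].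
  exact: (iso_main charK n_gt0 gam_prim compV compW alnz benz stv stu simpV simpW).
Qed.
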